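(* Let $P$ be a pre-run of vocabulary $\Upsilon_0^+$ satisfying the Train Motion requirement, and let $A$ be an initial state of the railroad ealgebra whose $\Upsilon_0^+$-reduct equals $P(0)$. Then there is exactly one run $Q$ of the one-module program Controller (over vocabulary $\Upsilon_1^+$, with TrackStatus external and Deadline, Dir internal) such that $Q(0)$ is the $\Upsilon_1^+$-reduct of $A$, the $\Upsilon_0^+$-reduct of $Q(t)$ equals $P(t)$ for all $t\ge0$, and Controller is immediate in $Q$.
   Context: Setting (evolving algebra for the railroad crossing). States are structures over a vocabulary $\Upsilon\cup\{\mathrm{CT}\}$ where $\Upsilon$ contains: a finite universe Tracks; the reals and ExtendedReals $=\mathbb{R}\cup\{\infty\}$ with standard $<$ and $+$ ($\infty$ largest); positive real constants $d_{close},d_{open},d_{min},d_{max}$ with $d_{close}<d_{min}\le d_{max}$; a unary function TrackStatus from Tracks to $\{\text{empty},\text{coming},\text{incrossing}\}$; a unary function Deadline from Tracks to ExtendedReals; a nullary Dir with values in $\{\text{open},\text{close}\}$; a nullary GateStatus with values in $\{\text{opened},\text{closed}\}$; and $\mathrm{CT}$ is a nullary real-valued symbol (current time). Let $\Upsilon_1=\Upsilon\setminus\{\mathrm{GateStatus}\}$, $\Upsilon_0=\Upsilon_1\setminus\{\mathrm{Deadline},\mathrm{Dir}\}$, and $\Upsilon_i^+=\Upsilon_i\cup\{\mathrm{CT}\}$. Put $W=d_{min}-d_{close}$. For a track $x$, SafeToOpen is $\forall x\in\mathrm{Tracks}$ [$\mathrm{TrackStatus}(x)=\text{empty}$ or $\mathrm{CT}+d_{open}<\mathrm{Deadline}(x)$].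 The module Controller executes simultaneously, for every track $x$, SetDeadline$(x)$ ''if TrackStatus$(x)$=coming and Deadline$(x)=\infty$ then Deadline$(x):=\mathrm{CT}+W$'', SignalClose$(x)$ ''if $\mathrm{CT}=$Deadline$(x)$ then Dir:=close'', ClearDeadline$(x)$ ''if TrackStatus$(x)$=empty and Deadline$(x)<\infty$ then Deadline$(x):=\infty$'', together with SignalOpen ''if Dir=close and SafeToOpen then Dir:=open''. Executing it means computing all updates generated in the current state and performing them simultaneously (nothing happens if inconsistent). It is enabled at a state if its update set is consistent and contains an update that changes the state. Runs: for a map $t\mapsto R(t)$, $t\in[0,\infty)$, to states of a vocabulary $V\cup\{\mathrm{CT}\}$, let $\rho(t)$ be the reduct to $V$. $R$ is a pre-run if all $R(t)$ share a superuniverse, $\mathrm{CT}=t$ in $R(t)$, and for every $\tau>0$ there are $0=t_0<\dots<t_n=\tau$ with $\rho$ constant on each $(t_i,t_{i+1})$; $\rho(t+)$, $\rho(t-)$ are the one-sided constant values. A pre-run is a run of a program if (i) whenever $\rho(t+)\neq\rho(t)$, $\rho(t+)$ is the $V$-reduct of the result of executing some of its modules at $R(t)$ (these fire at $t$), with external functions equal in $\rho(t)$ and $\rho(t+)$; (ii) whenever $t>0$ and $\rho(t)\ne\rho(t-)$, they differ only in external functions. An agent is immediate if it fires at every moment at which it is enabled. Initial states: TrackStatus$(x)$=empty and Deadline$(x)=\infty$ for every track $x$. Train Motion requirement for $P$: for each track $x$ there is a finite or infinite sequence $0=t_0<t_1<t_2<\cdots$ with TrackStatus$(x)$=empty over each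 $[t_{3i},t_{3i+1})$, =coming over each $[t_{3i+1},t_{3i+2})$ where $d_{min}\le t_{3i+2}-t_{3i+1}\le d_{max}$, =incrossing over each $[t_{3i+2},t_{3i+3})$, and, if the sequence is finite with last element $t_k$, then $3\mid k$ and TrackStatus$(x)$=empty over $[t_k,\infty)$. *)

(* Defs.v *)
From HB Require Import structures.
From mathcomp Require Import all_boot all_order all_algebra.
From mathcomp Require Import reals.
Set Implicit Arguments. Unset Strict Implicit. Unset Printing Implicit Defensive.
Import Order.TTheory GRing.Theory Num.Theory.
Local Open Scope ring_scope.

Inductive status := empty | coming | incrossing.
Inductive direction := open | close.

Inductive ext (R : Type) := Fin of R | Inf.
Arguments Inf {R}.

Definition lt_ext (R : realType) (a b : ext R) : Prop :=
  match a, b with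
  | Fin x, Fin y => x < y
  | Fin _, Inf => True
  | Inf, _ => False
  end.

Section Railroad.
Variables (R : realType) (T : finType).

(* Reduct to Upsilon_1 (without CT) of a state: TrackStatus, Deadline, Dir.
   Tracks, the reals and the constants are static and fixed as parameters. *)
Record state1 := State1 {
  TrackStatus : {ffun T -> status};
  Deadline : {ffun T -> ext R};
  Dir : direction }.

Inductive gatestatus := opened | closed.
Record fullState := FullState {
  fTrackStatus : {ffun T -> status};
  fDeadline : {ffun T -> ext R};
  fDir : direction;
  fGateStatus : gatestatus;
  fCT : R }.

Definition initial (A : fullState) : Prop :=
  forall x, fTrackStatus A x = empty /\ fDeadline A x = Inf.

Definition reduct1 (A : fullState) : state1 :=
  State1 (fTrackStatus A) (fDeadline A) (fDir A).

Definition piecewise_const (X : Type) (f : R -> X) : Prop :=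
  forall tau : R, 0 < tau ->
    exists s : seq R, sorted <%R (0 :: s) /\ last 0 s = tau /\
      forall i, (i < size s)%N ->
        forall u v, nth 0 (0 :: s) i < u < nth 0 (0 :: s) i.+1 ->
                    nth 0 (0 :: s) i < v < nth 0 (0 :: s) i.+1 -> f u = f v.

Definition right_val (X : Type) (f : R -> X) (t : R) (x : X) : Prop :=
  exists2 e : R, 0 < e & forall u, t < u < t + e -> f u = x.
Definition left_val (X : Type) (f : R -> X) (t : R) (x : X) : Prop :=
  exists2 e : R, 0 < e & forall u, t - e < u < t -> f u = x.

Definition train_motion (dmin dmax : R) (P : R -> {ffun T -> status}) : Prop :=
  forall x : T, exists (t : nat -> R) (N : option nat),
    let inr j := match N with None => true | Some k => (j <= k)%N end in
    t 0%N = 0 /\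
    (forall j, inr j.+1 -> t j < t j.+1) /\
    (forall i, inr (3 * i).+1 -> forall u, t (3 * i)%N <= u < t (3 * i).+1 ->
        P u x = empty) /\
    (forall i, inr (3 * i).+2 ->
        dmin <= t (3 * i).+2 - t (3 * i).+1 <= dmax /\
        forall u, t (3 * i).+1 <= u < t (3 * i).+2 -> P u x = coming) /\
    (forall i, inr (3 * i).+3 -> forall u, t (3 * i).+2 <= u < t (3 * i).+3 ->
        P u x = incrossing) /\
    (forall k, N = Some k -> (3 %| k)%N /\ forall u, t k <= u -> P u x = empty).

Inductive update := UDeadline of T & ext R | UDir of direction.

Definition SafeToOpen (dopen : R) (s : state1) (ct : R) : Prop :=
  forall x, TrackStatus s x = empty \/ lt_ext (Fin (ct + dopen)) (Deadline s x).

Definition generates (dopen W : R) (s : state1) (ct : R) (u : update) : Prop :=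
  match u with
  | UDeadline x v =>
      (* SetDeadline(x) *)
      (TrackStatus s x = coming /\ Deadline s x = Inf /\ v = Fin (ct + W)) \/
      (* ClearDeadline(x) *)
      (TrackStatus s x = empty /\ lt_ext (Deadline s x) Inf /\ v = Inf)
  | UDir d =>
      (* SignalClose(x) *)
      (d = close /\ exists x, Fin ct = Deadline s x) \/
      (* SignalOpen *)
      (d = open /\ Dir s = close /\ SafeToOpen dopen s ct)
  end.

Definition consistent (dopen W : R) (s : state1) (ct : R) : Prop :=
  (forall x v v', generates dopen W s ct (UDeadline x v) ->
                  generates dopen W s ct (UDeadline x v') -> v = v') /\
  (forall d d', generates dopen W s ct (UDir d) ->
                generates dopen W s ct (UDir d') -> d = d').

Definition executes (dopen W : R) (s : state1) (ct : R) (s' : state1) : Prop :=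
  (consistent dopen W s ct ->
     TrackStatus s' = TrackStatus s /\
     (forall x, (forall v, generates dopen W s ct (UDeadline x v) -> Deadline s' x = v) /\
                ((forall v, ~ generates dopen W s ct (UDeadline x v)) ->
                   Deadline s' x = Deadline s x)) /\
     (forall d, generates dopen W s ct (UDir d) -> Dir s' = d) /\
     ((forall d, ~ generates dopen W s ct (UDir d)) -> Dir s' = Dir s)) /\
  (~ consistent dopen W s ct -> s' = s).

Definition changes (s : state1) (u : update) : Prop :=
  match u with
  | UDeadline x v => Deadline s x <> v
  | UDir d => Dir s <> d
  end.

Definition enabled (dopen W : R) (s : state1) (ct : R) : Prop :=
  consistent dopen W s ct /\
  exists u, generates dopen W s ct u /\ changes s u.

(* run of the one-module program Controller (TrackStatus external) *)
Definition is_run (dopen W : R) (Q : R -> state1) : Prop :=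
  piecewise_const Q /\
  (forall t, 0 <= t -> forall s, right_val Q t s -> s <> Q t ->
      executes dopen W (Q t) t s /\ TrackStatus s = TrackStatus (Q t)) /\
  (forall t, 0 < t -> forall s, left_val Q t s -> s <> Q t ->
      Deadline s = Deadline (Q t) /\ Dir s = Dir (Q t)).

Definition fires (dopen W : R) (Q : R -> state1) (t : R) : Prop :=
  exists s, [/\ right_val Q t s, s <> Q t & executes dopen W (Q t) t s].

Definition immediate (dopen W : R) (Q : R -> state1) : Prop :=
  forall t, 0 <= t -> enabled dopen W (Q t) t -> fires dopen W Q t.

End Railroad.

(* Main.v *)
Require Import Defs.
From HB Require Import structures.
From mathcomp Require Import all_boot all_order all_algebra.
From mathcomp Require Import reals.
From mathcomp Require Import boolp classical_sets lra zify.
Import Order.TTheory GRing.Theory Num.Theory.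
Local Open Scope ring_scope.

Section Gen.
Variable R : realType.

Definition small (p : R -> Prop) := exists2 e : R, 0 < e & forall h, 0 < h < e -> p h.

Lemma small_imp {p : R -> Prop} (q : R -> Prop) : small p -> (forall h, 0 < h -> p h -> q h) -> small q.
Proof.
case=> e e0 he H; exists e => // h /andP[h0 he']; apply: H => //; apply: he; by rewrite h0 he'.
Qed.

Lemma small_and {p q : R -> Prop} : small p -> small q -> small (fun h => p h /\ q h).
Proof.
case=> e1 e10 h1 [e2 e20 h2].
have [le|lt] := leP e1 e2.
- exists e1 => // h /andP[a b]; split; [apply: h1|apply: h2]; apply/andP; split => //; lra.
- exists e2 => // h /andP[a b]; split; [apply: h1|apply: h2]; apply/andP; split => //; lra.
Qed.

Lemma small_lt (c : R) : 0 < c -> small (fun h => h < c).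
Proof. by move=> c0; exists c => // h /andP[]. Qed.

Lemma small_true : small (fun _ => True).
Proof. by exists 1. Qed.

Lemma small_pick {p : R -> Prop} : small p -> exists h, 0 < h /\ p h.
Proof.
case=> e e0 he; exists (e / 2); split; first lra.
apply: he; apply/andP; split; lra.
Qed.

Lemma small_all {p : R -> Prop} :
  small p -> small (fun h => forall h', 0 < h' <= h -> p h').
Proof.
case=> e e0 he; exists e => // h /andP[h0 he'] h' /andP[a b].
apply: he; apply/andP; split => //; lra.
Qed.

Lemma small_fin (T : finType) (p : T -> R -> Prop) :
  (forall x, small (p x)) -> small (fun h => forall x, p x h).
Proof.
move=> H.
suff: small (fun h => forall x, x \in enum T -> p x h).
  move=> S; apply: (small_imp (fun h => forall x, p x h) S) => h _ Hh x; apply: Hh; by rewrite mem_enum.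
elim: (enum T) => [|y s IH]; first by exists 1.
apply: (small_imp (fun h => forall x, x \in y :: s -> p x h) (small_and (H y) IH)) => h _ [Hy Hs] x.
rewrite inE => /orP[/eqP->|xs] //; exact: Hs.
Qed.

Lemma small_neqr (c : ext R) (t : R) : small (fun h => c <> Fin (t + h)).
Proof.
case: c => [c0|]; last by apply: (small_imp _ small_true).
have [le|lt] := leP c0 t.
- exists 1 => // h /andP[h0 _] [E]; lra.
- exists (c0 - t); first lra.
  move=> h /andP[h0 he] [E]; lra.
Qed.

Lemma small_neql (c : ext R) (t : R) : small (fun h => c <> Fin (t - h)).
Proof.
case: c => [c0|]; last by apply: (small_imp _ small_true).
have [le|lt] := leP t c0.
- exists 1 => // h /andP[h0 _] [E]; lra.
- exists (t - c0); first lra.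
  move=> h /andP[h0 he] [E]; lra.
Qed.

Lemma right_valE (X : Type) (f : R -> X) t x :
  right_val f t x <-> small (fun h => f (t + h) = x).
Proof.
split.
- case=> e e0 he; exists e => // h /andP[a b]; apply: he; apply/andP; split; lra.
- case=> e e0 he; exists e => // u /andP[a b].
  have -> : u = t + (u - t) by lra.
  apply: he; apply/andP; split; lra.
Qed.

Lemma left_valE (X : Type) (f : R -> X) t x :
  left_val f t x <-> small (fun h => f (t - h) = x).
Proof.
split.
- case=> e e0 he; exists e => // h /andP[a b]; apply: he; apply/andP; split; lra.
- case=> e e0 he; exists e => // u /andP[a b].
  have -> : u = t - (t - u) by lra.
  apply: he; apply/andP; split; lra.
Qed.

Lemma right_val_uniq (X : Type) (f : R -> X) t a b :
  right_val f t a -> right_val f t b -> a = b.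
Proof.
move=> /right_valE Ha /right_valE Hb.
have [h [_ [E1 E2]]] := small_pick (small_and Ha Hb).
by rewrite -E1 -E2.
Qed.

Lemma real_ind (Phi : R -> Prop) :
  Phi 0 ->
  (forall m, 0 < m -> (forall a, 0 <= a < m -> Phi a) -> Phi m) ->
  (forall m, 0 <= m -> (forall a, 0 <= a <= m -> Phi a) -> small (fun h => Phi (m + h))) ->
  forall a, 0 <= a -> Phi a.
Proof.
move=> H0 Hl Hr a0 a00; apply: contrapT => Na0.
pose S : set R := fun a => 0 <= a /\ forall b, 0 <= b <= a -> Phi b.
have S0 : S 0.
  split; first by [].
  move=> b /andP[b1 b2]; have -> : b = 0 by apply/eqP; rewrite eq_le b1 b2.
  exact: H0.
have ubS : forall a, S a -> a <= a0.
  move=> a [a0' Ha]; rewrite leNgt; apply/negP => lt.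
  apply: Na0; apply: Ha; apply/andP; split => //; lra.
have hs : has_sup S by split; [exists 0 | exists a0 => a /ubS].
set m := sup S.
have m0 : 0 <= m by apply: sup_upper_bound.
have Hlt : forall b, 0 <= b < m -> Phi b.
  move=> b /andP[b0 bm].
  have [a Sa ba] := sup_adherent (eps := m - b) ltac:(lra) hs.
  case: Sa => _ Ha; apply: Ha; apply/andP; split => //; rewrite /m in ba; lra.
have Hm : Phi m.
  have [->|mne] := eqVneq m 0; first exact: H0.
  apply: Hl => //; rewrite lt_neqAle eq_sym mne m0 //.
have Hle : forall b, 0 <= b <= m -> Phi b.
  move=> b /andP[b0 bm]; have [->|bne] := eqVneq b m; first exact: Hm.
  apply: Hlt; apply/andP; split => //; rewrite lt_neqAle bne bm //.
case: (Hr m m0 Hle) => e e0 He.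
have : S (m + e / 2).
  split; first lra.
  move=> b /andP[b0 bm]; have [bm'|bm'] := leP b m.
  - apply: Hle; apply/andP; split => //.
  - have -> : b = m + (b - m) by lra.
    apply: He; apply/andP; split; lra.
move/(sup_upper_bound hs); rewrite -/m; lra.
Qed.

End Gen.
Arguments right_val_uniq {R X f t a b}.
Arguments small_fin {R T p}.
Arguments small_neqr {R}.
Arguments small_neql {R}.
Arguments real_ind {R}.
Arguments small_imp {R p} q.
Arguments small_and {R p q}.
Arguments small_pick {R p}.
Arguments small_all {R p}.
Arguments small_lt {R c}.
Arguments small {R}.
Arguments small_true {R}.


Section Gen2.
Variable R : realType.

Lemma find_int (a t : R) (s : seq R) :
  path <%R a s -> a <= t < last a s ->
  exists i, (i < size s)%N /\ nth 0 (a :: s) i <= t < nth 0 (a :: s) i.+1.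
Proof.
elim: s a => [|b s IH] a /=; first by move=> _ /andP[h1 h2]; lra.
move=> /andP[ab ps] /andP[a_t tl].
have [tb|bt] := ltP t b; first by exists 0%N; rewrite a_t tb.
have [i [si Hi]] := IH b ps ltac:(by rewrite bt tl).
by exists i.+1.
Qed.

Lemma find_intl (a t : R) (s : seq R) :
  path <%R a s -> a < t <= last a s ->
  exists i, (i < size s)%N /\ nth 0 (a :: s) i < t <= nth 0 (a :: s) i.+1.
Proof.
elim: s a => [|b s IH] a /=; first by move=> _ /andP[h1 h2]; lra.
move=> /andP[ab ps] /andP[a_t tl].
have [tb|bt] := leP t b; first by exists 0%N; rewrite a_t tb.
have [i [si Hi]] := IH b ps ltac:(by rewrite bt tl).
by exists i.+1.
Qed.

Lemma pc_right (X : Type) (f : R -> X) t :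
  piecewise_const f -> 0 <= t -> exists x, right_val f t x.
Proof.
move=> pc t0; have [s [so [sl Hs]]] := pc (t + 1) ltac:(lra).
have [i [si /andP[a b]]] := find_int 0 t s so ltac:(rewrite sl; apply/andP; split; lra).
set lo := nth 0 (0 :: s) i in a; set hi := nth 0 (0 :: s) i.+1 in b.
exists (f ((t + hi) / 2)); exists (hi - t); first lra.
move=> u /andP[u1 u2]; apply: (Hs i si); apply/andP; split; rewrite -/lo -/hi; lra.
Qed.

Lemma pc_left (X : Type) (f : R -> X) t :
  piecewise_const f -> 0 < t -> exists x, left_val f t x.
Proof.
move=> pc t0; have [s [so [sl Hs]]] := pc t t0.
have [i [si /andP[a b]]] := find_intl 0 t s so ltac:(rewrite sl; apply/andP; split; lra).
set lo := nth 0 (0 :: s) i in a; set hi := nth 0 (0 :: s) i.+1 in b.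
exists (f ((t + lo) / 2)); exists (t - lo); first lra.
move=> u /andP[u1 u2]; apply: (Hs i si); apply/andP; split; rewrite -/lo -/hi; lra.
Qed.

Definition pc_list {X : Type} (f : R -> X) (s : seq R) (a : R) :=
  sorted <%R (0 :: s) /\ last 0 s = a /\
      forall i, (i < size s)%N ->
        forall u v, nth 0 (0 :: s) i < u < nth 0 (0 :: s) i.+1 ->
                    nth 0 (0 :: s) i < v < nth 0 (0 :: s) i.+1 -> f u = f v.

Lemma pc_list_rcons {X : Type} {f : R -> X} {s a b} :
  pc_list f s a -> a < b ->
  (forall u v, a < u < b -> a < v < b -> f u = f v) -> pc_list f (rcons s b) b.
Proof.
move=> [so [sl Hs]] ab Hab; split; last split.
- by rewrite /= rcons_path -/(sorted _ (0 :: s)) so /= sl.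
- by rewrite last_rcons.
- move=> i; rewrite size_rcons ltnS leq_eqVlt => /orP[/eqP ->|isz] u v.
  + rewrite -cats1 -cat_cons !nth_cat /= ltnSn ltnn subnn /=.
    have -> : nth 0 (0 :: s) (size s) = a.
      by rewrite -sl; have := nth_last 0 (0 :: s).
    exact: Hab.
  + rewrite -cats1 -cat_cons !nth_cat /=.
    rewrite !ltnS (ltnW isz) isz; exact: Hs.
Qed.

Lemma pc_local (X : Type) (f : R -> X) :
  (forall t, 0 <= t -> exists x, right_val f t x) ->
  (forall t, 0 < t -> exists x, left_val f t x) -> piecewise_const f.
Proof.
move=> Hr Hl.
have key : forall a, 0 <= a -> exists s, pc_list f s a.
  apply: real_ind.
  - by exists [::]; split => //.
  - move=> m m0 IH; have [x [e e0 He]] := Hl m m0.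
    pose a := if e < m then m - e / 2 else m / 2.
    have [a0 [am ame]] : 0 <= a /\ a < m /\ m - e <= a.
      rewrite /a; case: ltP => h; split; lra.
    have [s Hs] := IH a ltac:(by rewrite a0 am).
    exists (rcons s m); apply: (pc_list_rcons Hs am) => u v /andP[u1 u2] /andP[v1 v2].
    by rewrite (He u) ?(He v) //; apply/andP; split; lra.
  - move=> m m0 IH; have [s Hs] := IH m ltac:(by rewrite m0 lexx).
    have [x [e e0 He]] := Hr m m0.
    exists e => // h /andP[h0 he]; exists (rcons s (m + h)).
    apply: (pc_list_rcons Hs) => [|u v /andP[u1 u2] /andP[v1 v2]]; first lra.
    by rewrite (He u) ?(He v) //; apply/andP; split; lra.
move=> tau tau0; have [s [so [sl Hs]]] := key tau (ltW tau0).
by exists s.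
Qed.

End Gen2.
Arguments pc_right {R X f t}.
Arguments pc_left {R X f t}.
Arguments pc_local {R X f}.


Section Gen3.
Variables (R : realType) (T : finType) (dopen W : R).

Lemma state1_eq (a b : state1 R T) :
  TrackStatus a = TrackStatus b -> Deadline a = Deadline b -> Dir a = Dir b -> a = b.
Proof. by case: a => ???; case: b => ??? /= -> -> ->. Qed.

Lemma exec_fun (s a b : state1 R T) ct :
  executes dopen W s ct a -> executes dopen W s ct b -> a = b.
Proof.
move=> [Ha Na] [Hb Nb].
case: (pselect (consistent dopen W s ct)) => hc; last by rewrite Na // Nb.
have [ta [da [d1 d2]]] := Ha hc; have [tb [db [e1 e2]]] := Hb hc.
apply: state1_eq; first by rewrite ta tb.
- apply/ffunP => x.
  case: (pselect (exists v, generates dopen W s ct (UDeadline x v))) => [[v hv]|hn].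
  + by rewrite ((da x).1 v hv) ((db x).1 v hv).
  + have hn' : forall v, ~ generates dopen W s ct (UDeadline x v) by move=> v hv; apply: hn; exists v.
    by rewrite ((da x).2 hn') ((db x).2 hn').
- case: (pselect (exists d, generates dopen W s ct (UDir R T d))) => [[d hd]|hn].
  + by rewrite (d1 d hd) (e1 d hd).
  + have hn' : forall d, ~ generates dopen W s ct (UDir R T d) by move=> d hd; apply: hn; exists d.
    by rewrite (d2 hn') (e2 hn').
Qed.

Lemma exec_self (s : state1 R T) ct :
  ~ enabled dopen W s ct -> executes dopen W s ct s.
Proof.
move=> ne; split => // hc.
have nc : forall u, generates dopen W s ct u -> ~ changes s u.
  by move=> u gu cu; apply: ne; split => //; exists u.
split => //; split; [move=> x; split => // v hv|split => // d hd].
- by apply: contrapT => /(nc _ hv).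
- by apply: contrapT => /(nc _ hd).
Qed.

Lemma exec_changes (s s' : state1 R T) ct :
  enabled dopen W s ct -> executes dopen W s ct s' -> s' <> s.
Proof.
move=> [hc [u [gu cu]]] [He _] E; have [_ [hd [hdir _]]] := He hc.
subst s'; move: gu cu; case: u => [x v|d] g /=.
- by rewrite ((hd x).1 v g).
- by rewrite (hdir d g).
Qed.

Lemma run_unique (Q1 Q2 : R -> state1 R T) :
  is_run dopen W Q1 -> is_run dopen W Q2 -> Q1 0 = Q2 0 ->
  (forall t, 0 <= t -> TrackStatus (Q1 t) = TrackStatus (Q2 t)) ->
  immediate dopen W Q1 -> immediate dopen W Q2 ->
  forall t, 0 <= t -> Q1 t = Q2 t.
Proof.
move=> [pc1 [r1 l1]] [pc2 [r2 l2]] E0 ET im1 im2.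
have rexec : forall Q : R -> state1 R T, is_run dopen W Q -> immediate dopen W Q ->
    forall t s, 0 <= t -> right_val Q t s -> executes dopen W (Q t) t s.
  move=> Q HQ im t s t0 rv; have [_ [r _]] := HQ.
  case: (pselect (s = Q t)) => [Es|ne]; last by case: (r t t0 s rv ne).
  subst s.
  apply: exec_self => en; have [s' [rv' ne' _]] := im t t0 en.
  by apply: ne'; rewrite -(right_val_uniq rv rv').
apply: real_ind => //.
- move=> m m0 IH.
  have [s1 hs1] := pc_left pc1 m0; have [s2 hs2] := pc_left pc2 m0.
  have e12 : s1 = s2.
    move/left_valE: hs1 => hs1; move/left_valE: hs2 => hs2.
    have [h [h0 [[a b] c]]] := small_pick (small_and (small_and hs1 hs2) (small_lt m0)).
    by rewrite -a -b IH //; apply/andP; split; lra.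
  subst s2.
  have F : forall Q : R -> state1 R T, (forall t, 0 < t -> forall s, left_val Q t s -> s <> Q t ->
      Deadline s = Deadline (Q t) /\ Dir s = Dir (Q t)) -> left_val Q m s1 ->
      Deadline s1 = Deadline (Q m) /\ Dir s1 = Dir (Q m).
    move=> Q l lv; case: (pselect (s1 = Q m)) => [->|ne] //; exact: l.
  have [a1 b1] := F Q1 l1 hs1; have [a2 b2] := F Q2 l2 hs2.
  apply: state1_eq; [exact: ET (ltW m0)|by rewrite -a1 -a2|by rewrite -b1 -b2].
- move=> m m0 IH; have Em := IH m ltac:(by rewrite m0 lexx).
  have [s1 hs1] := pc_right pc1 m0; have [s2 hs2] := pc_right pc2 m0.
  have x1 := rexec _ (conj pc1 (conj r1 l1)) im1 _ _ m0 hs1.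
  have x2 := rexec _ (conj pc2 (conj r2 l2)) im2 _ _ m0 hs2.
  rewrite Em in x1; have e12 := exec_fun _ _ _ _ x1 x2; subst s2.
  move/right_valE: hs1 => hs1; move/right_valE: hs2 => hs2.
  by apply: (small_imp _ (small_and hs1 hs2)) => h _ [-> ->].
Qed.

End Gen3.
Arguments exec_fun {R T dopen W s a b ct}.
Arguments exec_self {R T dopen W s ct}.
Arguments exec_changes {R T dopen W s s' ct}.
Arguments state1_eq {R T a b}.


Definition nextD (R : realType) (W : R) (s : status) (d : ext R) (t : R) : ext R :=
  match s, d with
  | coming, Inf => Fin (t + W)
  | empty, Fin _ => Inf
  | _, _ => d
  end.
Arguments nextD {R}.

Section Track.
Variables (R : realType) (dmin dmax W : R) (st : R -> status) (tau : nat -> R)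
  (N : option nat).
Hypotheses (Hmin : 0 < dmin) (HW0 : 0 < W) (HWm : W < dmin).
Definition inr j := match N with None => true | Some k => (j <= k)%N end.
Hypotheses (H0 : tau 0%N = 0)
  (Hinc : forall j, inr j.+1 -> tau j < tau j.+1)
  (Hemp : forall i, inr (3 * i).+1 -> forall u, tau (3 * i)%N <= u < tau (3 * i).+1 ->
        st u = empty)
  (Hcom : forall i, inr (3 * i).+2 ->
        dmin <= tau (3 * i).+2 - tau (3 * i).+1 <= dmax /\
        forall u, tau (3 * i).+1 <= u < tau (3 * i).+2 -> st u = coming)
  (Hcr : forall i, inr (3 * i).+3 -> forall u, tau (3 * i).+2 <= u < tau (3 * i).+3 ->
        st u = incrossing)
  (Hend : forall k, N = Some k -> (3 %| k)%N /\ forall u, tau k <= u -> st u = empty).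

Definition inD (u : R) i := inr (3 * i).+3 /\ tau (3 * i).+1 < u /\ u <= tau (3 * i).+3.
Definition Dspec u (v : ext R) :=
  (forall i, inD u i -> v = Fin (tau (3 * i).+1 + W)) /\ ((forall i, ~ inD u i) -> v = Inf).

Definition stj j := if (j %% 3 == 0)%N then empty else if (j %% 3 == 1)%N then coming
  else incrossing.
Definition Dph j := if (j %% 3 == 0)%N then Inf else Fin (tau (3 * (j %/ 3)).+1 + W).

Lemma j_cases j : (exists i, j = 3 * i)%N \/ (exists i, j = (3 * i).+1)%N \/
  (exists i, j = (3 * i).+2)%N.
Proof.
have : (j %% 3 = 0 \/ j %% 3 = 1 \/ j %% 3 = 2)%N by lia.
case=> [h|[h|h]]; [left|right; left|right; right]; exists (j %/ 3)%N; lia.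
Qed.

Lemma stj0 i : stj (3 * i) = empty. Proof. rewrite /stj; have -> : ((3 * i) %% 3 = 0)%N by lia. by []. Qed.
Lemma stj1 i : stj (3 * i).+1 = coming. Proof. rewrite /stj; have -> : ((3 * i).+1 %% 3 = 1)%N by lia. by []. Qed.
Lemma stj2 i : stj (3 * i).+2 = incrossing. Proof. rewrite /stj; have -> : ((3 * i).+2 %% 3 = 2)%N by lia. by []. Qed.
Lemma Dph0 i : Dph (3 * i) = Inf. Proof. rewrite /Dph; have -> : ((3 * i) %% 3 = 0)%N by lia. by []. Qed.
Lemma Dph1 i : Dph (3 * i).+1 = Fin (tau (3 * i).+1 + W).
Proof. rewrite /Dph; have -> : ((3 * i).+1 %% 3 = 1)%N by lia. have -> : ((3 * i).+1 %/ 3 = i)%N by lia. by []. Qed.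
Lemma Dph2 i : Dph (3 * i).+2 = Fin (tau (3 * i).+1 + W).
Proof. rewrite /Dph; have -> : ((3 * i).+2 %% 3 = 2)%N by lia. have -> : ((3 * i).+2 %/ 3 = i)%N by lia. by []. Qed.

Lemma inr_le {j j'} : (j <= j')%N -> inr j' -> inr j.
Proof. by rewrite /inr; case: N => // k jj jk; apply: leq_trans jk. Qed.

Lemma inr0 : inr 0. Proof. by rewrite /inr; case: N. Qed.

Lemma mono {j j'} : inr j' -> (j < j')%N -> tau j < tau j'.
Proof.
elim: j' => // j' IH hj'; rewrite ltnS leq_eqVlt => /orP[/eqP->|lt]; first exact: Hinc.
have := IH (inr_le (leqnSn _) hj') lt; have := Hinc _ hj'; lra.
Qed.

Lemma mono_le {j j'} : inr j' -> (j <= j')%N -> tau j <= tau j'.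
Proof.
move=> h; rewrite leq_eqVlt => /orP[/eqP->//|lt]; exact: ltW (mono h lt).
Qed.

Lemma inv {a b} : inr a -> inr b -> tau a < tau b -> (a < b)%N.
Proof.
move=> ha hb lt; rewrite ltnNge; apply/negP => ba.
have := mono_le ha ba; lra.
Qed.

Lemma inr_3 {i} : inr (3 * i).+1 -> inr (3 * i).+3.
Proof.
rewrite /inr; case E: N => [k|] // h; have [d _] := Hend _ E; lia.
Qed.

Lemma tau_lin i : inr (3 * i) -> i%:R * dmin <= tau (3 * i).
Proof.
elim: i => [|i IH] h; first by rewrite mul0r muln0 H0.
have h2 : inr (3 * i).+2 by apply: inr_le h; lia.
have [/andP[c _] _] := Hcom _ h2.
have l1 := Hinc _ h2.
have l0 : tau (3 * i)%N < tau (3 * i).+1 by apply: Hinc; apply: inr_le h2; lia.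
have E3 : (3 * i.+1 = (3 * i).+3)%N by lia.
have l2 : tau (3 * i).+2 < tau (3 * i).+3 by apply: Hinc; rewrite -E3.
rewrite E3.
have := IH (inr_le (leqnSn _) (inr_le (leqnSn _) h2)).
rewrite -nat1r mulrDl mul1r; lra.
Qed.

Lemma phase {t} : 0 <= t -> exists j, [/\ inr j, tau j <= t & (inr j.+1 -> t < tau j.+1)].
Proof.
move=> t0; apply: contrapT => Hn.
have all : forall j, inr j /\ tau j <= t.
  elim=> [|j [hj tj]]; first by split; [exact: inr0|rewrite H0].
  case: (pselect (inr j.+1 /\ tau j.+1 <= t)) => // hn; exfalso; apply: Hn.
  exists j; split => // hj1; rewrite ltNge; apply/negP => le; exact: hn.
have := (archi_boundP (x := t / dmin) ltac:(apply: divr_ge0 => //; exact: ltW)).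
move: (Num.Def.archi_bound _) => i lt.
have := tau_lin _ (all (3 * i)%N).1; have := (all (3 * i)%N).2.
rewrite ltr_pdivrMr // in lt; lra.
Qed.


Lemma not_inr {j} : inr j -> ~ inr j.+1 -> N = Some j.
Proof. rewrite /inr; case: N => [k|] // jk h; congr Some; lia. Qed.

Lemma stj_end {k} : N = Some k -> stj k = empty.
Proof. move=> E; have [d _] := Hend _ E; rewrite /stj; have -> : (k %% 3 = 0)%N by lia. by []. Qed.

Lemma inD_uniq {u i i'} : inD u i -> inD u i' -> i = i'.
Proof.
move=> [h3 [a b]] [h3' [a' b']].
have l1 : ((3 * i).+1 < (3 * i').+3)%N.
  apply: inv; [apply: inr_le h3; lia|exact: h3'|lra].
have l2 : ((3 * i').+1 < (3 * i).+3)%N.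
  apply: inv; [apply: inr_le h3'; lia|exact: h3|lra].
lia.
Qed.

Lemma Dspec_ex u : exists v, Dspec u v.
Proof.
case: (pselect (exists i, inD u i)) => [[i hi]|hn].
- exists (Fin (tau (3 * i).+1 + W)); split.
  + by move=> i' hi'; rewrite (inD_uniq hi hi').
  + by move=> /(_ i hi).
- exists Inf; split => // i hi; exfalso; apply: hn; by exists i.
Qed.

Variable D : R -> ext R.
Hypothesis HD : forall u, Dspec u (D u).

Lemma st_phase {j u} : inr j -> tau j <= u -> (inr j.+1 -> u < tau j.+1) -> st u = stj j.
Proof.
move=> hj tu ut.
case: (pselect (inr j.+1)) => h1; last first.
  have E := not_inr hj h1; rewrite (stj_end E); exact: (Hend _ E).2.
have ut' := ut h1.
case: (j_cases j) => [[i E]|[[i E]|[i E]]]; subst j.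
- rewrite stj0; apply: (Hemp _ h1); by rewrite tu ut'.
- rewrite stj1; apply: (Hcom _ h1).2; by rewrite tu ut'.
- rewrite stj2; apply: (Hcr _ h1); by rewrite tu ut'.
Qed.

Lemma D_phase {j u} : inr j -> tau j < u -> (inr j.+1 -> u <= tau j.+1) -> D u = Dph j.
Proof.
move=> hj tu ut; have [HD1 HD2] := HD u.
case: (j_cases j) => [[i E]|[[i E]|[i E]]]; subst j.
- rewrite Dph0; apply: HD2 => i' [h3 [a b]].
  have l1 : (3 * i < (3 * i').+3)%N by apply: inv => //; lra.
  case: (pselect (inr (3 * i).+1)) => h1.
  + have l2 : ((3 * i').+1 < (3 * i).+1)%N.
      apply: inv => //; [apply: inr_le h3; lia|have := ut h1; lra].
    lia.
  + have E := not_inr hj h1; move: h3; rewrite /inr E; lia.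
- rewrite Dph1; apply: HD1; split; first exact: inr_3.
  split => //.
  case: (pselect (inr (3 * i).+2)) => h1.
  + have := ut h1; have := mono_le (inr_3 hj) (leqnSn (3 * i).+2); lra.
  + have E := not_inr hj h1; have [d _] := Hend _ E; lia.
- have h1 : inr (3 * i).+1 by apply: inr_le hj; lia.
  have h3 := inr_3 h1.
  rewrite Dph2; apply: HD1; split => //; split.
  + have := Hinc _ hj; lra.
  + exact: ut.
Qed.

Lemma D_le0 u : u <= 0 -> D u = Inf.
Proof.
move=> u0; apply: (HD u).2 => i [h3 [a b]].
have h1 : inr (3 * i).+1 by apply: inr_le h3; lia.
have := mono (j := 0%N) h1 isT.
by rewrite H0; lra.
Qed.

Lemma nextD_same j : nextD W (stj j) (Dph j) = fun _ => Dph j.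
Proof.
by case: (j_cases j) => [[i ->]|[[i ->]|[i ->]]];
  rewrite ?stj0 ?stj1 ?stj2 ?Dph0 ?Dph1 ?Dph2.
Qed.

Lemma PTr t : 0 <= t ->
  small (fun h => st (t + h) = st t /\ D (t + h) = nextD W (st t) (D t) t).
Proof.
move=> t0; have [j [hj tj tj1]] := phase t0.
have stt : st t = stj j := st_phase hj tj tj1.
have Hnext : nextD W (stj j) (D t) t = Dph j.
  have [lt|le] := ltP (tau j) t.
    by rewrite (D_phase hj lt (fun h => ltW (tj1 h))) nextD_same.
  have Et : t = tau j by apply/eqP; rewrite eq_le le tj.
  clear le; case: j hj tj tj1 stt Et => [|j'] hj tj tj1 stt Et.
    by rewrite D_le0 ?Et ?H0 //.
  have hj' : inr j' := inr_le (leqnSn _) hj.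
  rewrite (D_phase (j := j') hj') ?Et; first last.
  - by move=> _; rewrite lexx.
  - exact: Hinc.
  case: (j_cases j') => [[i E]|[[i E]|[i E]]]; subst j'.
  + by rewrite stj1 Dph0 Dph1.
  + by rewrite stj2 Dph1 Dph2.
  + have -> : ((3 * i).+3 = 3 * i.+1)%N by lia.
    by rewrite stj0 Dph2 Dph0.
have win : small (fun h => inr j.+1 -> t + h < tau j.+1).
  case: (pselect (inr j.+1)) => h1.
  - have := tj1 h1 => lt; exists (tau j.+1 - t); first lra.
    move=> h /andP[a b] _; lra.
  - by exists 1 => // h _ /h1.
apply: (small_imp _ win) => h h0 w; rewrite stt Hnext; split.
- apply: st_phase hj _ w; lra.
- apply: D_phase hj _ (fun h1 => ltW (w h1)); lra.
Qed.

Lemma PTl t : 0 < t -> exists s0, small (fun h => st (t - h) = s0 /\ D (t - h) = D t).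
Proof.
move=> t0; have [j [hj tj tj1]] := phase (ltW t0).
have [lt|le] := ltP (tau j) t.
- exists (stj j); exists (t - tau j); first lra.
  move=> h /andP[a b]; split.
  + apply: st_phase hj _ _; first lra. by move=> h1; have := tj1 h1; lra.
  + rewrite (D_phase hj lt (fun h1 => ltW (tj1 h1))).
    apply: D_phase hj _ _; first lra. by move=> h1; have := tj1 h1; lra.
- have Et : t = tau j by apply/eqP; rewrite eq_le le tj.
  case: j hj tj tj1 Et {le} => [|j'] hj tj tj1 Et; first by move: t0; rewrite Et H0 ltxx.
  have hj' : inr j' := inr_le (leqnSn _) hj.
  have lt := Hinc _ hj.
  exists (stj j'); exists (tau j'.+1 - tau j'); first lra.
  move=> h /andP[a b]; split.
  + apply: st_phase hj' _ _; first lra. by move=> _; lra.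
  + rewrite (D_phase (j := j') (u := t) hj'); first last.
    * by move=> _; rewrite Et.
    * by rewrite Et.
    apply: D_phase hj' _ _; first lra. by move=> _; lra.
Qed.

Lemma C1 t : D t = Fin t -> st t <> empty.
Proof.
have [HD1 HD2] := HD t.
case: (pselect (exists i, inD t i)) => [[i hi]|hn]; last first.
  by rewrite HD2 // => i hi; apply: hn; exists i.
rewrite (HD1 i hi) => -[E].
case: hi => [h3 [a b]].
have h2 : inr (3 * i).+2 by apply: inr_le h3; lia.
have [/andP[c _] Hc] := Hcom _ h2.
rewrite (Hc t) //; apply/andP; split; [exact: ltW a|]. rewrite -E. have := HWm. move: c. lra.
Qed.

End Track.


Section Main.
Variables (R : realType) (T : finType) (d_close d_open d_min d_max : R).
Hypotheses (Hclose : 0 < d_close) (Hopen : 0 < d_open) (Hmin : 0 < d_min)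
  (Hcm : d_close < d_min).
Variable P : R -> {ffun T -> status}.
Variable A : fullState R T.
Hypothesis HA : initial A.
Hypothesis HAP : fTrackStatus A = P 0.
Variable W : R.
Hypothesis HWdef : W = d_min - d_close.
Variables (tau : T -> nat -> R) (Nx : T -> option nat).
Hypotheses (TH0 : forall x, tau x 0%N = 0)
  (THinc : forall x j, inr (Nx x) j.+1 -> tau x j < tau x j.+1)
  (THemp : forall x i, inr (Nx x) (3 * i).+1 -> forall u, tau x (3 * i)%N <= u < tau x (3 * i).+1 ->
        P u x = empty)
  (THcom : forall x i, inr (Nx x) (3 * i).+2 ->
        d_min <= tau x (3 * i).+2 - tau x (3 * i).+1 <= d_max /\
        forall u, tau x (3 * i).+1 <= u < tau x (3 * i).+2 -> P u x = coming)
  (THcr : forall x i, inr (Nx x) (3 * i).+3 -> forall u, tau x (3 * i).+2 <= u < tau x (3 * i).+3 ->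
        P u x = incrossing)
  (THend : forall x k, Nx x = Some k -> (3 %| k)%N /\ forall u, tau x k <= u -> P u x = empty).
Variable D : T -> R -> ext R.
Hypothesis HD : forall x u, Dspec _ W (tau x) (Nx x) u (D x u).

Lemma HW0 : 0 < W. Proof. rewrite HWdef; have := Hcm; lra. Qed.
Lemma HWm : W < d_min. Proof. rewrite HWdef; have := Hclose; lra. Qed.

Lemma Fr x {t} : 0 <= t ->
  small (fun h => P (t + h) x = P t x /\ D x (t + h) = nextD W (P t x) (D x t) t).
Proof.
exact: (@PTr R d_min d_max W (fun u => P u x) (tau x) (Nx x) Hmin HW0 HWm (TH0 x)
  (THinc x) (THemp x) (THcom x) (THcr x) (THend x) (D x) (HD x) t).
Qed.

Lemma Fl x {t} : 0 < t -> exists s0, small (fun h => P (t - h) x = s0 /\ D x (t - h) = D x t).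
Proof.
exact: (@PTl R d_min d_max W (fun u => P u x) (tau x) (Nx x) Hmin HW0 HWm (TH0 x)
  (THinc x) (THemp x) (THcom x) (THcr x) (THend x) (D x) (HD x) t).
Qed.

Lemma FC1 x t : D x t = Fin t -> P t x <> empty.
Proof.
exact: (@C1 R d_min d_max W (fun u => P u x) (tau x) (Nx x) Hmin HW0 HWm
  (THcom x) (D x) (HD x) t).
Qed.

Lemma FD0 x u : u <= 0 -> D x u = Inf.
Proof.
exact: (@D_le0 R d_min W (tau x) (Nx x) Hmin HW0 HWm (TH0 x) (THinc x) (D x) (HD x) u).
Qed.

Definition SafeP t := forall x, P t x = empty \/ lt_ext (Fin (t + d_open)) (D x t).
Definition closeEv t := exists x, D x t = Fin t.
Definition G t := exists d, [/\ 0 <= d, d < t, closeEv d & forall u, d <= u < t -> ~ SafeP u].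
Definition Dirf t := if t == 0 then fDir A else if pselect (G t) then close else open.
Definition Q t := State1 (P t) [ffun x => D x t] (Dirf t).

Lemma safeE t : SafeToOpen d_open (Q t) t <-> SafeP t.
Proof. by split => H x; have := H x; rewrite /= ffunE. Qed.

Lemma notSafeE t : ~ SafeP t ->
  exists x c, [/\ P t x <> empty, D x t = Fin c & c <= t + d_open].
Proof.
move=> /existsNP [x /not_orP [a b]]; exists x.
move: b; case: (D x t) => [c|] //= b; exists c; split => //.
by rewrite leNgt; apply/negP.
Qed.

Lemma persist {t} : 0 <= t -> ~ SafeP t -> small (fun h => ~ SafeP (t + h)).
Proof.
move=> t0 /notSafeE [x [c [ne Dc cle]]].
apply: (small_imp _ (Fr x t0)) => h h0 [Pe De] S.
case: (S x) => [|]; first by rewrite Pe.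
rewrite De Dc; move: ne; case: (P t x) => //= _; lra.
Qed.

Lemma close_notsafe {t} : closeEv t -> ~ SafeP t.
Proof.
move=> [x Dx] S; case: (S x) => [|]; first exact: FC1 Dx.
by rewrite Dx /=; have := Hopen; lra.
Qed.

Lemma noclose_r {t} : 0 <= t -> small (fun h => ~ closeEv (t + h)).
Proof.
move=> t0.
have H : forall x, small (fun h => D x (t + h) <> Fin (t + h)).
  move=> x; apply: (small_imp _ (small_and (Fr x t0) (small_neqr (nextD W (P t x) (D x t) t) t))).
  by move=> h _ [[_ ->] ne].
apply: (small_imp _ (small_fin H)) => h _ Hh [x Dx]; exact: Hh x Dx.
Qed.

Lemma noclose_l {t} : 0 < t -> small (fun h => ~ closeEv (t - h)).
Proof.
move=> t0.
have H : forall x, small (fun h => D x (t - h) <> Fin (t - h)).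
  move=> x; have [s0 Hs] := Fl x t0.
  apply: (small_imp _ (small_and Hs (small_neql (D x t) t))).
  by move=> h _ [[_ ->] ne].
apply: (small_imp _ (small_fin H)) => h _ Hh [x Dx]; exact: Hh x Dx.
Qed.

Lemma G0 : ~ G 0.
Proof. by case=> d [a b _ _]; lra. Qed.

Lemma Dirf_G {t} : t != 0 -> Dirf t = if pselect (G t) then close else open.
Proof. by rewrite /Dirf => /negbTE ->. Qed.

Lemma cons t : consistent d_open W (Q t) t.
Proof.
split.
- move=> x v v' /=; rewrite ffunE.
  by case=> [[a [b ->]]|[a [b ->]]] [[a' [b' ->]]|[a' [b' ->]]] //; move: a a'; rewrite ?a ?a' => -> .
- move=> d d' /=.
  have cl : forall d, d = close /\ (exists x, Fin t = [ffun x => D x t] x) ->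
               closeEv t.
    by move=> _ [_ [x]]; rewrite ffunE => E; exists x.
  case=> [[-> H]|[-> [_ S]]] [[-> H']|[-> [_ S']]] //; exfalso.
  + exact: (close_notsafe (cl close (conj erefl H)) (proj1 (safeE t) S')).
  + exact: (close_notsafe (cl close (conj erefl H')) (proj1 (safeE t) S)).
Qed.


Lemma gen_nextD {t x v} : generates d_open W (Q t) t (UDeadline x v) ->
  v = nextD W (P t x) (D x t) t.
Proof.
rewrite /= ffunE; case=> [[-> [-> ->]]|[-> [+ ->]]] //=.
by case: (D x t).
Qed.

Lemma nogen_nextD {t x} : (forall v, ~ generates d_open W (Q t) t (UDeadline x v)) ->
  nextD W (P t x) (D x t) t = D x t.
Proof.
move=> H; case E1: (P t x); case E2: (D x t) => [c|] //=; exfalso.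
- apply: (H Inf); rewrite /= ffunE E1 E2; right; by split.
- apply: (H (Fin (t + W))); rewrite /= ffunE E1 E2; left; by split.
Qed.

Lemma SafeP0 : SafeP 0.
Proof. by move=> x; left; rewrite -HAP; case: (HA x). Qed.

Lemma GR {t h} : 0 <= t -> 0 < h ->
  (forall h', 0 < h' <= h -> ~ closeEv (t + h')) ->
  (~ SafeP t -> forall h', 0 < h' <= h -> ~ SafeP (t + h')) ->
  (G (t + h) <-> closeEv t \/ (G t /\ ~ SafeP t)).
Proof.
move=> t0 h0 Hnc Hps; split.
- case=> d [d0 dth cd Hd].
  have dt : d <= t.
    rewrite leNgt; apply/negP => td; apply: (Hnc (d - t)); first (apply/andP; split; lra).
    by have -> : t + (d - t) = d by lra.
  have [Edt|ne] := eqVneq d t; first by left; rewrite -Edt.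
  right; split.
  + exists d; split => //; first by rewrite lt_neqAle ne dt.
    move=> u /andP[a b]; apply: Hd; apply/andP; split => //; lra.
  + apply: Hd; apply/andP; split => //; lra.
- case=> [ct|[[d [d0 dt cd Hd]] ns]].
  + exists t; split => //; first lra.
    move=> u /andP[a b]; have [->|ne] := eqVneq u t; first exact: close_notsafe ct.
    have -> : u = t + (u - t) by lra.
    apply: (Hps (close_notsafe ct)); apply/andP; split; first by rewrite subr_gt0 lt_def ne a.
    lra.
  + exists d; split => //; first lra.
    move=> u /andP[a b]; have [ut|tu] := ltP u t.
      by apply: Hd; rewrite a ut.
    have [->|ne] := eqVneq u t; first exact: ns.
    have -> : u = t + (u - t) by lra.
    apply: (Hps ns); apply/andP; split; first by rewrite subr_gt0 lt_def ne tu.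
    lra.
Qed.

Lemma nz {a b : R} : 0 <= a -> 0 < b -> a + b != 0.
Proof. move=> a0 b0; apply: lt0r_neq0; lra. Qed.

Lemma Rlem {t} : 0 <= t -> small (fun h => executes d_open W (Q t) t (Q (t + h))).
Proof.
move=> t0.
have A1 := small_fin (fun x => Fr x t0).
have A2 := small_all (noclose_r t0).
have A3 : small (fun h => ~ SafeP t -> forall h', 0 < h' <= h -> ~ SafeP (t + h')).
  case: (pselect (SafeP t)) => S.
  - by apply: (small_imp _ small_true) => h _ _ /(_ S).
  - by apply: (small_imp _ (small_all (persist t0 S))) => h _ H _.
apply: (small_imp _ (small_and A1 (small_and A2 A3))) => h h0 [H1 [H2 H3]].
have GRh := GR t0 h0 H2 H3.
have ct_gen : forall d, generates d_open W (Q t) t (UDir R T d) -> d = close -> closeEv t.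
  by move=> d [[_ [x]]|[-> _]] //; rewrite /= ffunE => E _; exists x.
split; last by move=> nc; exfalso; exact: nc (cons t).
move=> _; split; [|split; [|split]].
- by apply/ffunP => x /=; exact: (H1 x).1.
- move=> x; split => [v hv|hn]; rewrite /= !ffunE (H1 x).2.
  + by rewrite (gen_nextD hv).
  + exact: (nogen_nextD hn).
- move=> d hd; rewrite /= (Dirf_G (nz t0 h0)).
  case: hd => [[Ed [x Ex]]|[Ed [Dc S]]].
  + subst d; case: pselect => // nG; exfalso; apply: nG; apply/GRh; left.
    by exists x; move: Ex; rewrite ffunE.
  + subst d; case: pselect => // HG; exfalso.
    have S' := proj1 (safeE t) S.
    by case/GRh: HG => [/close_notsafe|[_ ]].
- move=> hn; rewrite /= (Dirf_G (nz t0 h0)).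
  have nct : ~ closeEv t.
    by move=> [x Ex]; apply: (hn close); left; split => //; exists x; rewrite ffunE.
  have nop : ~ (Dirf t = close /\ SafeP t).
    by move=> [Dc S]; apply: (hn open); right; split => //; split => //; apply/safeE.
  have [Et|tne] := eqVneq t 0.
  + subst t; have Dopen : Dirf 0 = open.
      by case E: (Dirf 0) => //; exfalso; apply: nop; split => //; exact: SafeP0.
    rewrite Dopen; case: pselect => // HG; exfalso.
    by case/GRh: HG => [//|[/G0]].
  + have Dt := Dirf_G tne.
    case: (pselect (G t)) => HGt.
    * have nS : ~ SafeP t by move=> S; apply: nop; split => //; rewrite Dt; case: (pselect (G t)).
      case: (pselect (G (t + h))) => [HG0|nG]; first by rewrite Dt; case: (pselect (G t)).
      by exfalso; apply: nG; apply/GRh; right.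
    * case: (pselect (G (t + h))) => [HG|nG0]; last by rewrite Dt; case: (pselect (G t)).
      by exfalso; case/GRh: HG => [//|[]].
Qed.

Lemma Llem {t} : 0 < t ->
  exists st0, small (fun h => Q (t - h) = State1 st0 (Deadline (Q t)) (Dir (Q t))).
Proof.
move=> t0.
have [s0 Hs0] := choice (fun x => Fl x t0).
exists [ffun x => s0 x].
have [e e0 He] := small_and (small_and (small_fin Hs0) (noclose_l t0)) (small_lt t0).
exists e => // h /andP[h0 he].
have [[Hx Hnc] ht] := He h ltac:(by rewrite h0 he).
have dle : forall d, d < t -> closeEv d -> d <= t - e.
  move=> d dt cd; rewrite leNgt; apply/negP => lt.
  have [[_ nc] _] := He (t - d) ltac:(apply/andP; split; lra).
  by apply: nc; have -> : t - (t - d) = d by lra.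
have GL : G (t - h) <-> G t.
  split.
  - case=> d [d0 dlt cd Hd].
    have de := dle d ltac:(lra) cd.
    exists d; split => //; first lra.
    move=> u /andP[du ut].
    have [uh|uh] := ltP u (t - h); first by apply: Hd; rewrite du uh.
    pose w := t - (h + e) / 2.
    have := Hd w ltac:(rewrite /w; apply/andP; split; lra).
    move/notSafeE => [x [c [ne Dc cle]]].
    have [[Hw _] _] := He ((h + e) / 2) ltac:(apply/andP; split; lra).
    have [[Hu _] _] := He (t - u) ltac:(apply/andP; split; lra).
    have Eu : t - (t - u) = u by lra.
    rewrite Eu in Hu.
    move=> S; case: (S x) => [Pu|].
    + by apply: ne; rewrite -/w in Hw; rewrite (Hw x).1 -(Hu x).1.
    + rewrite (Hu x).2 -(Hw x).2 -/w Dc /=; rewrite /w in cle *; lra.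
  - case=> d [d0 dlt cd Hd].
    have de := dle d dlt cd.
    exists d; split => //; first lra.
    move=> u /andP[du ut]; apply: Hd; rewrite du /=; lra.
apply: state1_eq => /=.
- by apply/ffunP => x; rewrite ffunE; exact: (Hx x).1.
- by apply/ffunP => x; rewrite !ffunE; exact: (Hx x).2.
- have tn : t != 0 by apply: lt0r_neq0.
  have thn : t - h != 0 by apply: lt0r_neq0; lra.
  rewrite (Dirf_G tn) (Dirf_G thn).
  by case: (pselect (G t)) => a; case: (pselect (G (t - h))) => b //; exfalso; [apply: b; apply/GL|apply: a; apply/GL].
Qed.

Lemma Q0 : Q 0 = reduct1 A.
Proof.
rewrite /Q /reduct1 /Dirf eqxx; congr State1; first by [].
by apply/ffunP => x; rewrite ffunE FD0 //; case: (HA x).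
Qed.

Lemma main_exists :
  exists Q : R -> state1 R T,
    [/\ is_run d_open W Q, Q 0 = reduct1 A,
        (forall t, 0 <= t -> TrackStatus (Q t) = P t),
        immediate d_open W Q &
        forall Q' : R -> state1 R T,
          [/\ is_run d_open W Q', Q' 0 = reduct1 A,
              (forall t, 0 <= t -> TrackStatus (Q' t) = P t) &
              immediate d_open W Q'] ->
          forall t, 0 <= t -> Q' t = Q t].
Proof.
exists Q.
have rv : forall t, 0 <= t -> exists h0,
    right_val Q t (Q (t + h0)) /\ executes d_open W (Q t) t (Q (t + h0)).
  move=> t t0; have Rl := Rlem t0; have [h0 [h00 X0]] := small_pick Rl.
  exists h0; split => //; apply/right_valE; apply: (small_imp _ Rl) => h _ Xh.
  exact: exec_fun Xh X0.
have run : is_run d_open W Q.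
  split; [|split].
  - apply: pc_local.
    + by move=> t t0; have [h0 [rv0 _]] := rv t t0; exists (Q (t + h0)).
    + by move=> t t0; have [st0 L] := Llem t0; eexists; apply/left_valE; exact: L.
  - move=> t t0 s hs ne; have [h0 [rv0 X0]] := rv t t0.
    rewrite -(right_val_uniq rv0 hs); split => //.
    by case: X0 => X _; case: (X (cons t)).
  - move=> t t0 s hs ne; have [st0 L] := Llem t0.
    move/left_valE: hs => hs; have [h [_ [E1 E2]]] := small_pick (small_and hs L).
    by rewrite -E1 E2.
have imm : immediate d_open W Q.
  move=> t t0 en; have [h0 [rv0 X0]] := rv t t0.
  by exists (Q (t + h0)); split => //; exact: exec_changes en X0.
split => //; first exact: Q0.
move=> Q' [r' e' ts' im'] t t0.
apply: (@run_unique _ _ _ _ _ _ r' run _ _ im' imm) => //; first by rewrite e' Q0.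

Qed.

End Main.


Theorem mainTheorem16 (R : realType) (T : finType)
    (d_close d_open d_min d_max : R)
    (Hclose : 0 < d_close) (Hopen : 0 < d_open) (Hmin : 0 < d_min) (Hmax : 0 < d_max)
    (Hcm : d_close < d_min) (Hmm : d_min <= d_max)
    (P : R -> {ffun T -> status})
    (HP : piecewise_const P) (HTM : train_motion d_min d_max P)
    (A : fullState R T) (HA : initial A)
    (HAP : fTrackStatus A = P 0 /\ fCT A = 0) :
  let W := d_min - d_close in
  exists Q : R -> state1 R T,
    [/\ is_run d_open W Q, Q 0 = reduct1 A,
        (forall t, 0 <= t -> TrackStatus (Q t) = P t),
        immediate d_open W Q &
        forall Q' : R -> state1 R T,
          [/\ is_run d_open W Q', Q' 0 = reduct1 A,
              (forall t, 0 <= t -> TrackStatus (Q' t) = P t) &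
              immediate d_open W Q'] ->
          forall t, 0 <= t -> Q' t = Q t].
Proof.
move=> W.
move: HTM; rewrite /train_motion => HTM'.
have [f Hf] := choice HTM'.
have [g Hg] := choice Hf.
have TH0 : forall x, f x 0%N = 0 by move=> x; case: (Hg x).
have THinc : forall x j, inr (g x) j.+1 -> f x j < f x j.+1.
  by move=> x; case: (Hg x) => _ [].
have THemp : forall x i, inr (g x) (3 * i).+1 -> forall u, f x (3 * i)%N <= u < f x (3 * i).+1 ->
        P u x = empty.
  by move=> x; case: (Hg x) => _ [_ []].
have THcom : forall x i, inr (g x) (3 * i).+2 ->
        d_min <= f x (3 * i).+2 - f x (3 * i).+1 <= d_max /\
        forall u, f x (3 * i).+1 <= u < f x (3 * i).+2 -> P u x = coming.
  by move=> x; case: (Hg x) => _ [_ [_ []]].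
have THcr : forall x i, inr (g x) (3 * i).+3 -> forall u, f x (3 * i).+2 <= u < f x (3 * i).+3 ->
        P u x = incrossing.
  by move=> x; case: (Hg x) => _ [_ [_ [_ []]]].
have THend : forall x k, g x = Some k -> (3 %| k)%N /\ forall u, f x k <= u -> P u x = empty.
  by move=> x; case: (Hg x) => _ [_ [_ [_ [_ ]]]].
have HW0 : 0 < W by rewrite /W; lra.
have HWm : W < d_min by rewrite /W; lra.
have [Df HDf] : exists Df : T -> R -> ext R, forall x u, Dspec R W (f x) (g x) u (Df x u).
  have H : forall x, exists Dx : R -> ext R, forall u, Dspec R W (f x) (g x) u (Dx u).
    move=> x; have [Dx HDx] := choice (Dspec_ex _ _ _ _ _ Hmin HW0 HWm (THinc x)).
    by exists Dx.
  by have [Df HDf] := choice H; exists Df.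
exact: (@main_exists R T d_close d_open d_min d_max Hclose Hopen Hmin Hcm P A HA HAP.1 W (erefl _) f g TH0 THinc THemp THcom THcr THend Df HDf).
Qed.
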